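(* Fix $n\in\mathbb N$, a diagonal matrix $D=\mathrm{diag}(d_1,\dots,d_n)$ with positive diagonal entries, and vectors $\mathbf v=(v_1,\dots,v_n)^\top$, $\mathbf c=(c_1,\dots,c_n)^\top\in\mathbb R^n$ such that $c_i\ne0$ for some $i\in\{1,\dots,n-1\}$. Set $\mathbf 1_A=1$ if $v_n-\frac{\mathbf c^\top D^{-1}\mathbf v}{\mathbf c^\top D^{-1}\mathbf c}c_n<0$ and $\mathbf 1_A=0$ otherwise, and define $$\lambda^*=\frac{\mathbf c^\top D^{-1}\mathbf v-c_nv_nd_n^{-1}\mathbf 1_A}{\mathbf c^\top D^{-1}\mathbf c-c_n^2d_n^{-1}\mathbf 1_A},\qquad\mu^*=(v_n-\lambda^*c_n)^-,\qquad\mathbf z^*=D^{-1}(\mathbf v-\lambda^*\mathbf c+\mu^*\mathbf e_n).$$ (a) $\mathbf z^*$ is the unique optimiser of the primal problem: minimise $\frac12\mathbf z^\top D\mathbf z-\mathbf v^\top\mathbf z$ subject to $\mathbf z\in\mathbb R^n$, $\mathbf c^\top\mathbf z=0$, $z_n\ge0$; and $\|\mathbf z^*\|\le d_{\min}^{-1}\|\mathbf v\|$, where $d_{\min}=\min(d_1,\dots,d_n)$. (b) $(\lambda^*,\mu^* )$ is the unique optimiser of the dual problem of this primal problem, which can be written as: maximise $-\frac12(\mathbf v-\lambda\mathbf c+\mu\mathbf e_n)^\top D^{-1}(\mathbf v-\lambda\mathbf c+\mu\mathbf e_n)$ subject to $\lambda\in\mathbb R$, $\mu\ge0$. Moreover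 $\|\lambda^*\mathbf c-\mu^*\mathbf e_n\|\le(1+\frac{d_{\max}}{d_{\min}})\|\mathbf v\|$, where $d_{\max}=\max(d_1,\dots,d_n)$. (c) The optimal values of the primal and dual problems coincide (no duality gap) and equal $-\frac12\mathbf v^\top\mathbf z^*$. (d) The triple satisfies $\mathbf z^*=\arg\min_{\mathbf z\in\mathbb R^n}L(\mathbf z,\lambda^*,\mu^* )$, $\mathbf c^\top\mathbf z^*=0$, $z^*_n\ge0$, $\mu^*\ge0$, $\mu^*z^*_n=0$, where $L$ is the Lagrangian of the primal problem; moreover $(\lambda^*,\mu^* )$ is a Lagrange multiplier for the primal problem.
   Context: $\mathbf e_n$ denotes the $n$-th unit vector, $\|\cdot\|$ the Euclidean norm, and $x^-=\max(-x,0)$. For a primal problem ''minimise $f(\mathbf z)$ subject to $\mathbf z\in\mathbb R^n$, $h(\mathbf z)=0$, $g(\mathbf z)\le0$'' with optimal value $f^*$, the Lagrangian is $L(\mathbf z,\lambda,\mu)=f(\mathbf z)+\lambda h(\mathbf z)+\mu g(\mathbf z)$; a pair $(\lambda^*,\mu^* )$ is a Lagrange multiplier if $f^*=\inf_{\mathbf z\in\mathbb R^n}L(\mathbf z,\lambda^*,\mu^* )$ and $\mu^*\ge0$; the dual problem is ''maximise $q(\lambda,\mu)=\inf_{\mathbf z\in\mathbb R^n}L(\mathbf z,\lambda,\mu)$ subject to $\lambda\in\mathbb R$, $\mu\ge0$''. Here $f(\mathbf z)=\frac12\mathbf z^\top D\mathbf z-\mathbf v^\top\mathbf z$, $h(\mathbf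 z)=\mathbf c^\top\mathbf z$, $g(\mathbf z)=-z_n$, so $L(\mathbf z,\lambda,\mu)=\frac12\mathbf z^\top D\mathbf z-\mathbf v^\top\mathbf z+\lambda\mathbf c^\top\mathbf z-\mu\mathbf e_n^\top\mathbf z$. *)

(* Defs.v *)
From HB Require Import structures.
From mathcomp Require Import all_boot all_order all_algebra.
From mathcomp Require Import classical_sets reals.
Set Implicit Arguments. Unset Strict Implicit. Unset Printing Implicit Defensive.
Import Order.TTheory GRing.Theory Num.Theory.
Local Open Scope ring_scope.
Local Open Scope classical_set_scope.

(* Vectors of R^(n+1) are column vectors 'cV[R]_n.+1; the last coordinate
   (index n+1 in 1-based numbering) is ord_max. *)
Section Defs.
Variables (R : realType) (n : nat).
Notation V := 'cV[R]_n.+1.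

Definition dotv (x y : V) : R := (x^T *m y) 0 0.
Definition qform (A : 'M[R]_n.+1) (x : V) : R := (x^T *m A *m x) 0 0.
Definition enorm (x : V) : R := Num.sqrt (dotv x x).
Definition elast : V := delta_mx ord_max 0.
Definition negpart (x : R) : R := Num.max (- x) 0.

Variables (d : 'rV[R]_n.+1) (v c : V).
Definition Dm : 'M[R]_n.+1 := diag_mx d.
Definition dmin : R := \big[Num.min/d 0 ord0]_(i < n.+1) d 0 i.
Definition dmax : R := \big[Num.max/d 0 ord0]_(i < n.+1) d 0 i.

Definition fobj (z : V) : R := 1/2 * qform Dm z - dotv v z.
Definition hcon (z : V) : R := dotv c z.
Definition gcon (z : V) : R := - z ord_max 0.
Definition feasible (z : V) : Prop := hcon z = 0 /\ gcon z <= 0.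
Definition lagrangian (z : V) (la mu : R) : R :=
  fobj z + la * hcon z + mu * gcon z.
Definition primal_value : R := inf [set fobj z | z in feasible].
Definition dual_fun (la mu : R) : R := inf [set lagrangian z la mu | z in setT].
Definition dual_value : R :=
  sup [set q | exists la mu, 0 <= mu /\ q = dual_fun la mu].
Definition is_lagrange_multiplier (la mu : R) : Prop :=
  primal_value = inf [set lagrangian z la mu | z in setT] /\ 0 <= mu.

Definition cDv : R := (c^T *m invmx Dm *m v) 0 0.
Definition cDc : R := (c^T *m invmx Dm *m c) 0 0.
Definition indA : R :=
  if v ord_max 0 - cDv / cDc * c ord_max 0 < 0 then 1 else 0.
Definition lambda_star : R :=
  (cDv - c ord_max 0 * v ord_max 0 / d 0 ord_max * indA)
  / (cDc - (c ord_max 0) ^+ 2 / d 0 ord_max * indA).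
Definition mu_star : R := negpart (v ord_max 0 - lambda_star * c ord_max 0).
Definition z_star : V :=
  invmx Dm *m (v - lambda_star *: c + mu_star *: elast).
End Defs.

(* Main.v *)
Require Import Defs.
From HB Require Import structures.
From mathcomp Require Import all_boot all_order all_algebra.
From mathcomp Require Import classical_sets reals.
From mathcomp Require Import ring lra boolp.
Import Order.TTheory GRing.Theory Num.Theory.
Set Implicit Arguments. Unset Strict Implicit. Unset Printing Implicit Defensive.
Local Open Scope ring_scope.
Local Open Scope classical_set_scope.

Section H.
Variables (R : realType) (n : nat).
Notation V := 'cV[R]_n.+1.

Lemma inf_eqx (E : set R) x : E x -> (forall y, E y -> x <= y) -> inf E = x.
Proof.
move=> Ex lb; apply/le_anti/andP; split.
  by apply: ge_inf => //; exists x.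
by apply: lb_le_inf; [exists x|].
Qed.

Lemma sup_eqx (E : set R) x : E x -> (forall y, E y -> y <= x) -> sup E = x.
Proof.
move=> Ex ub; apply/le_anti/andP; split.
  by apply: ge_sup => //; exists x.
by apply: sup_upper_bound => //; split; [exists x|exists x].
Qed.

Lemma mxv_diag (x y : V) (e : 'rV[R]_n.+1) :
  (x^T *m diag_mx e *m y) 0 0 = \sum_i x i 0 * e 0 i * y i 0.
Proof.
rewrite -mulmxA mul_diag_mx mxE; apply: eq_bigr => i _; by rewrite !mxE mulrA.
Qed.

Lemma dotvE (x y : V) : dotv x y = \sum_i x i 0 * y i 0.
Proof. by rewrite /dotv mxE; apply: eq_bigr => i _; rewrite mxE. Qed.

Lemma psum_gt0 (F : 'I_n.+1 -> R) j : (forall i, 0 <= F i) -> 0 < F j -> 0 < \sum_i F i.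
Proof.
move=> h hj; rewrite (bigD1 j) //=; apply: ltr_pwDl => //.
by apply: sumr_ge0 => i _.
Qed.

Lemma neq_coord (y z : V) : y != z -> exists i, y i 0 != z i 0.
Proof.
move=> hyz; apply/not_existsP => /= h; move/eqP: hyz; apply; apply/matrixP => i j.
rewrite (ord1 j); by apply/eqP; apply/negPn/negP; apply: h.
Qed.

Variables (d : 'rV[R]_n.+1) (hd : forall i, 0 < d 0 i).

Definition dinv : 'rV[R]_n.+1 := \row_i (d 0 i)^-1.

Lemma invDm : invmx (Dm d) = diag_mx dinv.
Proof.
have H : Dm d *m diag_mx dinv = 1%:M.
  apply/matrixP => i j; rewrite /Dm mul_diag_mx !mxE.
  case: (i =P j) => [->|_]; rewrite ?mulr1n ?mulr0n ?mulr0 //.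
  by rewrite divff // gt_eqF.
have [U _] := mulmx1_unit H.
by rewrite -[invmx _]mulmx1 -H mulmxA mulVmx // mul1mx.
Qed.

Lemma invDm_coord (w : V) i : (invmx (Dm d) *m w) i 0 = w i 0 / d 0 i.
Proof. by rewrite invDm mul_diag_mx !mxE mulrC. Qed.

Lemma Dm_coord (w : V) i : (Dm d *m w) i 0 = d 0 i * w i 0.
Proof. by rewrite /Dm mul_diag_mx !mxE. Qed.

Lemma qformD (y : V) : qform (Dm d) y = \sum_i d 0 i * y i 0 ^+ 2.
Proof. rewrite /qform mxv_diag; apply: eq_bigr => i _; rewrite expr2; ring. Qed.

Lemma qformDinv (y : V) : qform (invmx (Dm d)) y = \sum_i y i 0 ^+ 2 / d 0 i.
Proof. rewrite /qform invDm mxv_diag; apply: eq_bigr => i _; rewrite mxE expr2; ring. Qed.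

Lemma elastE i : elast R n i 0 = (i == ord_max)%:R.
Proof. by rewrite /elast mxE eqxx andbT. Qed.

End H.

Section H2.
Variables (R : realType) (n : nat).
Notation V := 'cV[R]_n.+1.
Variables (d : 'rV[R]_n.+1) (hd : forall i, 0 < d 0 i) (v c : V).

Definition W (l m : R) : V := v - l *: c + m *: elast R n.
Lemma WE l m i : W l m i 0 = v i 0 - l * c i 0 + m * ((i == ord_max)%:R : R).
Proof. by rewrite !mxE eqxx andbT. Qed.

Definition Phi (w y : V) := 1/2 * \sum_i d 0 i * y i 0 ^+ 2 - \sum_i w i 0 * y i 0.
Lemma PhiE w y : Phi w y = \sum_i (1/2 * (d 0 i * y i 0 ^+ 2) - w i 0 * y i 0).
Proof. by rewrite /Phi sumrB mulr_sumr. Qed.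

Lemma sumW l m (y : V) : \sum_i W l m i 0 * y i 0 =
  \sum_i v i 0 * y i 0 - l * \sum_i c i 0 * y i 0 + m * y ord_max 0.
Proof.
have -> : \sum_i W l m i 0 * y i 0 = \sum_i (v i 0 * y i 0 - l * (c i 0 * y i 0))
     + \sum_i m * (((i == ord_max)%:R : R) * y i 0).
  by rewrite -big_split; apply: eq_bigr => i _ /=; rewrite WE; ring.
rewrite sumrB -!mulr_sumr; congr (_ + _ * _); rewrite (bigD1 ord_max) //= ?eqxx ?mul1r big1 ?addr0 //.
by move=> i /negPf ->; rewrite mul0r.
Qed.

Lemma lagE y l m : lagrangian d v c y l m = Phi (W l m) y.
Proof. by rewrite /lagrangian /fobj /hcon /gcon qformD !dotvE /Phi sumW; ring. Qed.

Lemma Phi_diff w y : Phi w y - Phi w (invmx (Dm d) *m w) =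
  1/2 * \sum_i d 0 i * (y i 0 - w i 0 / d 0 i) ^+ 2.
Proof.
rewrite !PhiE -sumrB mulr_sumr; apply: eq_bigr => i _.
rewrite invDm_coord //; have h' : d 0 i != 0 by rewrite gt_eqF.
by field.
Qed.

Lemma Phi_min w : Phi w (invmx (Dm d) *m w) = - (1/2) * \sum_i w i 0 ^+ 2 / d 0 i.
Proof.
rewrite !PhiE mulr_sumr; apply: eq_bigr => i _.
rewrite invDm_coord //; have h' : d 0 i != 0 by rewrite gt_eqF.
by field.
Qed.

Lemma Phi_strict w y : y != invmx (Dm d) *m w ->
  Phi w (invmx (Dm d) *m w) < Phi w y.
Proof.
rewrite -subr_gt0 Phi_diff => /neq_coord [i hi].
apply: mulr_gt0; first by lra.
apply: (@psum_gt0 _ _ (fun j => d 0 j * (y j 0 - w j 0 / d 0 j) ^+ 2) i) => [j|].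
  by apply: mulr_ge0; [exact: ltW|exact: sqr_ge0].
apply: mulr_gt0; first exact: hd.
rewrite lt0r sqr_ge0 andbT sqrf_eq0 subr_eq0.
by rewrite -invDm_coord.
Qed.

Lemma Phi_le w y : Phi w (invmx (Dm d) *m w) <= Phi w y.
Proof.
case: (eqVneq y (invmx (Dm d) *m w)) => [->//|h]; exact/ltW/Phi_strict.
Qed.

Lemma dual_funE l m : dual_fun d v c l m = Phi (W l m) (invmx (Dm d) *m W l m).
Proof.
apply: inf_eqx; first by exists (invmx (Dm d) *m W l m) => //; rewrite lagE.
by move=> _ [y _ <-]; rewrite lagE; exact: Phi_le.
Qed.

End H2.

Section Scalar.
Variable R : realType.

Lemma scalar_kkt (a b cn vn dn cDv cDc : R) : 0 < b -> 0 < dn ->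
  cDv = a + cn * vn / dn -> cDc = b + cn ^+ 2 / dn ->
  let ind := if vn - cDv / cDc * cn < 0 then 1 else 0 in
  let la := (cDv - cn * vn / dn * ind) / (cDc - cn ^+ 2 / dn * ind) in
  let mu := negpart (vn - la * cn) in
  a - la * b + cn * (vn - la * cn + mu) / dn = 0 /\
  0 <= (vn - la * cn + mu) / dn /\ 0 <= mu /\
  mu * ((vn - la * cn + mu) / dn) = 0.
Proof.
move=> hb hdn hv hc ind la mu.
have hcDc : 0 < cDc.
  have : 0 <= cn ^+ 2 / dn by apply: divr_ge0; [exact: sqr_ge0|exact: ltW].
  by rewrite hc; lra.
have hcDc0 : cDc != 0 by rewrite gt_eqF.
have hb0 : b != 0 by rewrite gt_eqF.
have hdn0 : dn != 0 by rewrite gt_eqF.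
move: @ind @la @mu; rewrite /=; case: ifP => hA.
- rewrite !mulr1.
  have -> : cDv - cn * vn / dn = a by rewrite hv; ring.
  have -> : cDc - cn ^+ 2 / dn = b by rewrite hc; ring.
  have hX : vn * b - a * cn < 0.
    have e1 : (vn - cDv / cDc * cn) * cDc = vn * cDc - cDv * cn by field.
    have e2 : vn * cDc - cDv * cn = vn * b - a * cn by rewrite hv hc; ring.
    by rewrite -e2 -e1 pmulr_llt0.
  have hy : vn - a / b * cn < 0.
    have -> : vn - a / b * cn = (vn * b - a * cn) * b^-1 by field.
    by rewrite pmulr_llt0 // invr_gt0.
  have hmu : negpart (vn - a / b * cn) = - (vn - a / b * cn).
    by rewrite /negpart; apply/max_idPl; rewrite oppr_ge0 ltW.
  rewrite hmu subrr mulr0 mul0r mulr0; split; first by field.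
  by split => //; split => //; rewrite oppr_ge0 ltW.
- rewrite !mulr0 !subr0.
  have hy : 0 <= vn - cDv / cDc * cn by rewrite leNgt hA.
  have hmu : negpart (vn - cDv / cDc * cn) = 0.
    by rewrite /negpart; apply/max_idPr; rewrite oppr_le0.
  rewrite hmu addr0 mul0r; split; last by split => //; apply: divr_ge0 => //; exact: ltW.
  have -> : a - cDv / cDc * b + cn * (vn - cDv / cDc * cn) / dn = cDv - cDv / cDc * cDc.
    by rewrite hv hc; ring.
  by rewrite divfK // subrr.
Qed.

End Scalar.

Section Main.
Variables (R : realType) (n : nat).
Notation V := 'cV[R]_n.+1.
Variables (d : 'rV[R]_n.+1) (hd : forall i, 0 < d 0 i) (v c : V).
Hypothesis hc : exists i : 'I_n.+1, (i < n)%N /\ c i 0 != 0.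

Local Notation la := (lambda_star d v c).
Local Notation mu := (mu_star d v c).
Local Notation zs := (z_star d v c).

Lemma zsE : zs = invmx (Dm d) *m W v c la mu.
Proof. by []. Qed.

Lemma zs_coord i : zs i 0 = W v c la mu i 0 / d 0 i.
Proof. by rewrite zsE invDm_coord. Qed.

Lemma kkt : dotv c zs = 0 /\ 0 <= zs ord_max 0 /\ 0 <= mu /\ mu * zs ord_max 0 = 0.
Proof.
set a := \sum_(i | i != ord_max) c i 0 * v i 0 / d 0 i.
set b := \sum_(i | i != ord_max) c i 0 ^+ 2 / d 0 i.
have hb : 0 < b.
  case: hc => i0 [hi0 hci0].
  have hne : i0 != ord_max by rewrite -val_eqE /= neq_ltn hi0.
  rewrite /b (bigD1 i0) //=; apply: ltr_pwDl.
    apply: divr_gt0; last exact: hd.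
    by rewrite lt0r sqr_ge0 andbT sqrf_eq0.
  apply: sumr_ge0 => i _; apply: divr_ge0; [exact: sqr_ge0|exact: ltW].
have hv : cDv d v c = a + c ord_max 0 * v ord_max 0 / d 0 ord_max.
  rewrite /cDv invDm // mxv_diag (bigD1 ord_max) //= addrC mxE; congr (_ + _); last by ring.
  by apply: eq_bigr => i _; rewrite mxE; ring.
have hcc : cDc d c = b + c ord_max 0 ^+ 2 / d 0 ord_max.
  rewrite /cDc invDm // mxv_diag (bigD1 ord_max) //= addrC mxE; congr (_ + _); last by rewrite expr2; ring.
  by apply: eq_bigr => i _; rewrite mxE expr2; ring.
have [h1 [h2 [h3 h4]]] := scalar_kkt hb (hd ord_max) hv hcc.
have hzn : zs ord_max 0 = (v ord_max 0 - la * c ord_max 0 + mu) / d 0 ord_max.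
  by rewrite zs_coord WE eqxx mulr1.
have hdot : dotv c zs = a - la * b + c ord_max 0 * (v ord_max 0 - la * c ord_max 0 + mu) / d 0 ord_max.
  rewrite dotvE (bigD1 ord_max) //= zs_coord WE eqxx mulr1 addrC mulrA; congr (_ + _).
  rewrite /a /b mulr_sumr -sumrB; apply: eq_bigr => i /negPf hi.
  by rewrite zs_coord WE hi mulr0 addr0; ring.
rewrite hdot hzn; split; first exact: h1.
by split; [exact: h2|split; [exact: h3|exact: h4]].
Qed.

End Main.

Section Norms.
Variables (R : realType) (n : nat).
Notation V := 'cV[R]_n.+1.
Variables (d : 'rV[R]_n.+1) (hd : forall i, 0 < d 0 i).

Lemma sqrt_le_mul (S T k : R) : 0 <= k -> 0 <= T -> S <= k ^+ 2 * T ->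
  Num.sqrt S <= k * Num.sqrt T.
Proof.
move=> hk hT hS; rewrite -{1}(ger0_norm hk) -sqrtr_sqr -sqrtrM ?sqr_ge0 //.
by rewrite ler_sqrt // mulr_ge0 ?sqr_ge0.
Qed.

Lemma enormE (x : V) : enorm x = Num.sqrt (\sum_i x i 0 ^+ 2).
Proof. by rewrite /enorm dotvE; congr Num.sqrt; apply: eq_bigr => i _; rewrite expr2. Qed.

Lemma dmin_le i : dmin d <= d 0 i.
Proof. exact: bigmin_le. Qed.

Lemma dmin_gt0 : 0 < dmin d.
Proof.
rewrite /dmin; apply: (big_ind (fun x => 0 < x)) => //.
by move=> x y hx hy; rewrite lt_min hx hy.
Qed.

Lemma le_dmax i : d 0 i <= dmax d.
Proof. exact: le_bigmax. Qed.

End Norms.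

Section Norms2.
Variables (R : realType) (n : nat).
Notation V := 'cV[R]_n.+1.
Variables (d : 'rV[R]_n.+1) (hd : forall i, 0 < d 0 i).

Lemma norm_core (z v : V) :
  \sum_i d 0 i * z i 0 ^+ 2 = \sum_i v i 0 * z i 0 ->
  dmin d ^+ 2 * \sum_i z i 0 ^+ 2 <= \sum_i v i 0 ^+ 2.
Proof.
move=> e.
have hδ := dmin_gt0 hd.
have hδ0 : dmin d != 0 by rewrite gt_eqF.
have h1 : dmin d * \sum_i z i 0 ^+ 2 <= \sum_i v i 0 * z i 0.
  rewrite -e mulr_sumr; apply: ler_sum => i _.
  by apply: ler_wpM2r; [exact: sqr_ge0|exact: dmin_le].
have h2 : \sum_i v i 0 * z i 0 <= (\sum_i v i 0 ^+ 2) / (2 * dmin d)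
            + dmin d / 2 * \sum_i z i 0 ^+ 2.
  rewrite mulr_suml mulr_sumr -big_split /=; apply: ler_sum => i _.
  rewrite -subr_ge0.
  have -> : v i 0 ^+ 2 / (2 * dmin d) + dmin d / 2 * z i 0 ^+ 2 - v i 0 * z i 0
        = (v i 0 - dmin d * z i 0) ^+ 2 / (2 * dmin d) by field.
  by apply: divr_ge0; [exact: sqr_ge0|lra].
set S := \sum_i z i 0 ^+ 2 in h1 h2 *.
set T := \sum_i v i 0 ^+ 2 in h2 *.
set P := \sum_i v i 0 * z i 0 in h1 h2.
have h3 : dmin d * S <= T / dmin d.
  have e2 : T / (2 * dmin d) = (T / dmin d) / 2 by field.
  rewrite e2 in h2; lra.
have -> : T = dmin d * (T / dmin d) by field.
by rewrite expr2 -mulrA ler_pM2l.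
Qed.

End Norms2.

Section Norms3.
Variables (R : realType) (n : nat).
Notation V := 'cV[R]_n.+1.
Variables (d : 'rV[R]_n.+1) (hd : forall i, 0 < d 0 i).

Lemma norm_core2 (z v : V) :
  dmin d ^+ 2 * \sum_i z i 0 ^+ 2 <= \sum_i v i 0 ^+ 2 ->
  \sum_i (v i 0 - d 0 i * z i 0) ^+ 2 <= (1 + dmax d / dmin d) ^+ 2 * \sum_i v i 0 ^+ 2.
Proof.
move=> hS.
have hδ := dmin_gt0 hd.
have hδ0 : dmin d != 0 by rewrite gt_eqF.
have hD : 0 < dmax d by apply: lt_le_trans (le_dmax d ord0); exact: hd.
set r := dmax d / dmin d.
have hr : 0 < r by apply: divr_gt0.
have hr0 : r != 0 by rewrite gt_eqF.
set S := \sum_i z i 0 ^+ 2 in hS *.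
set T := \sum_i v i 0 ^+ 2 in hS *.
set Q := \sum_i (d 0 i * z i 0) ^+ 2.
have h1 : \sum_i (v i 0 - d 0 i * z i 0) ^+ 2 <= (1 + r) * T + (1 + r^-1) * Q.
  rewrite /T /Q !mulr_sumr -big_split /=; apply: ler_sum => i _.
  rewrite -subr_ge0.
  have -> : (1 + r) * v i 0 ^+ 2 + (1 + r^-1) * (d 0 i * z i 0) ^+ 2
            - (v i 0 - d 0 i * z i 0) ^+ 2 = (r * v i 0 + d 0 i * z i 0) ^+ 2 / r by field.
  by apply: divr_ge0; [exact: sqr_ge0|exact: ltW].
have h2 : Q <= dmax d ^+ 2 * S.
  rewrite /Q /S mulr_sumr; apply: ler_sum => i _.
  rewrite exprMn; apply: ler_wpM2r; first exact: sqr_ge0.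
  rewrite -subr_ge0 subr_sqr; apply: mulr_ge0.
    by rewrite subr_ge0 le_dmax.
  by apply: addr_ge0; [exact: ltW|exact/ltW/hd].
have h3 : dmax d ^+ 2 * S <= r ^+ 2 * T.
  have -> : dmax d ^+ 2 * S = r ^+ 2 * (dmin d ^+ 2 * S) by rewrite /r; field.
  by apply: ler_wpM2l => //; exact: sqr_ge0.
have h4 : (1 + r^-1) * Q <= (1 + r^-1) * (r ^+ 2 * T).
  apply: ler_wpM2l; last exact: le_trans h3.
  by apply: addr_ge0 => //; rewrite invr_ge0 ltW.
have -> : (1 + r) ^+ 2 * T = (1 + r) * T + (1 + r^-1) * (r ^+ 2 * T) by field.
apply: (le_trans h1); exact: lerD.
Qed.

End Norms3.

Section Main2.
Variables (R : realType) (n : nat).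
Notation V := 'cV[R]_n.+1.
Variables (d : 'rV[R]_n.+1) (hd : forall i, 0 < d 0 i) (v c : V).
Hypothesis hc : exists i : 'I_n.+1, (i < n)%N /\ c i 0 != 0.

Local Notation la := (lambda_star d v c).
Local Notation mu := (mu_star d v c).
Local Notation zs := (z_star d v c).

Lemma fobj_lag y l m : fobj d v y = lagrangian d v c y l m - l * hcon c y - m * gcon y.
Proof. by rewrite /lagrangian; ring. Qed.

Lemma L_strict y : y != zs -> lagrangian d v c zs la mu < lagrangian d v c y la mu.
Proof. by rewrite !lagE zsE; exact: Phi_strict. Qed.

Lemma fobj_zs : fobj d v zs = lagrangian d v c zs la mu.
Proof.
have [h1 [h2 [h3 h4]]] := kkt hd v hc.
by rewrite (fobj_lag _ la mu) /hcon /gcon h1 mulrN h4; ring.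
Qed.

Lemma primal_le y : feasible c y -> fobj d v zs <= fobj d v y.
Proof.
move=> [hy1 hy2]; have [h1 [h2 [h3 h4]]] := kkt hd v hc.
rewrite fobj_zs (fobj_lag y la mu) hy1 mulr0 subr0.
have : 0 <= mu * gcon y * -1 by rewrite -mulrA mulr_ge0 // mulrN1 oppr_ge0.
case: (eqVneq y zs) => [->|hne]; first by lra.
have := L_strict hne; lra.
Qed.

Lemma primal_strict y : feasible c y -> y != zs -> fobj d v zs < fobj d v y.
Proof.
move=> [hy1 hy2] hne; have [h1 [h2 [h3 h4]]] := kkt hd v hc.
rewrite fobj_zs (fobj_lag y la mu) hy1 mulr0 subr0.
have : 0 <= mu * gcon y * -1 by rewrite -mulrA mulr_ge0 // mulrN1 oppr_ge0.
have := L_strict hne; lra.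
Qed.

Lemma dual_star : dual_fun d v c la mu = fobj d v zs.
Proof. by rewrite (dual_funE hd) -zsE -lagE fobj_zs. Qed.

Lemma dual_le_gen l m : 0 <= m -> dual_fun d v c l m <= Phi d (W v c l m) zs.
Proof. by move=> hm; rewrite (dual_funE hd); exact: Phi_le. Qed.

Lemma Phi_zs l m : Phi d (W v c l m) zs = fobj d v zs - m * zs ord_max 0.
Proof.
have [h1 [h2 [h3 h4]]] := kkt hd v hc.
by rewrite -lagE (fobj_lag zs l m) /hcon /gcon h1; ring.
Qed.

Lemma dual_strict l m : 0 <= m -> (l, m) != (la, mu) ->
  dual_fun d v c l m < dual_fun d v c la mu.
Proof.
move=> hm hne; have [h1 [h2 [h3 h4]]] := kkt hd v hc.
have hmz : 0 <= m * zs ord_max 0 by apply: mulr_ge0.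
rewrite dual_star (dual_funE hd).
case: (eqVneq zs (invmx (Dm d) *m W v c l m)) => [e|ne]; last first.
  have := Phi_strict hd ne; rewrite Phi_zs; lra.
exfalso; move: hne; apply/negP; rewrite negbK.
have hW : forall i, W v c l m i 0 = W v c la mu i 0.
  move=> i; have := congr1 (fun M : V => M i 0 * d 0 i) e.
  by rewrite /= (zs_coord hd) (invDm_coord hd) // !divfK // gt_eqF.
case: (eqVneq l la) => [el|nl].
  have := hW ord_max; rewrite !WE eqxx !mulr1 el => /addrI ->.
  by [].
case: hc => i0 [hi0 hci0].
have hne' : i0 != ord_max by rewrite -val_eqE /= neq_ltn hi0.
have := hW i0; rewrite !WE (negPf hne') !mulr0 !addr0 => /addrI /oppr_inj /(mulIf hci0) el.
by move: nl; rewrite el eqxx.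
Qed.

Lemma quad_id : \sum_i d 0 i * zs i 0 ^+ 2 = \sum_i v i 0 * zs i 0.
Proof.
have [h1 [h2 [h3 h4]]] := kkt hd v hc.
have -> : \sum_i d 0 i * zs i 0 ^+ 2 = \sum_i W v c la mu i 0 * zs i 0.
  apply: eq_bigr => i _; rewrite (zs_coord hd).
  have h' : d 0 i != 0 by rewrite gt_eqF.
  by field.
by rewrite sumW -(dotvE c) h1 mulr0 subr0 h4 addr0.
Qed.

End Main2.

Theorem lemmaA1 (R : realType) (n : nat) (d : 'rV[R]_n.+1) (v c : 'cV[R]_n.+1)
  (hd : forall i, 0 < d 0 i)
  (hc : exists i : 'I_n.+1, (i < n)%N /\ c i 0 != 0) :
  let la := lambda_star d v c in
  let mu := mu_star d v c in
  let z := z_star d v c in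
  (* (a) *)
  (feasible c z /\
   (forall y, feasible c y -> y != z -> fobj d v z < fobj d v y) /\
   enorm z <= (dmin d)^-1 * enorm v) /\
  (* (b) *)
  ((forall l m, dual_fun d v c l m =
      - (1/2) * qform (invmx (Dm d)) (v - l *: c + m *: elast R n)) /\
   0 <= mu /\
   (forall l m, 0 <= m -> (l, m) != (la, mu) ->
      dual_fun d v c l m < dual_fun d v c la mu) /\
   enorm (la *: c - mu *: elast R n) <= (1 + dmax d / dmin d) * enorm v) /\
  (* (c) *)
  (primal_value d v c = dual_value d v c /\
   primal_value d v c = fobj d v z /\
   dual_value d v c = dual_fun d v c la mu /\
   primal_value d v c = - (1/2) * dotv v z) /\
  (* (d) *)
  ((forall y, y != z -> lagrangian d v c z la mu < lagrangian d v c y la mu) /\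
   hcon c z = 0 /\ 0 <= z ord_max 0 /\ 0 <= mu /\ mu * z ord_max 0 = 0 /\
   is_lagrange_multiplier d v c la mu).
Proof.
move=> la mu z.
have [h1 [h2 [h3 h4]]] := kkt hd v hc.
have hfeas : feasible c z by split; [exact: h1|rewrite /gcon oppr_le0].
have hPrim : primal_value d v c = fobj d v z.
  apply: inf_eqx; first by exists z.
  by move=> _ [y hy <-]; exact: (primal_le hd v hc).
have hDualv : dual_value d v c = dual_fun d v c la mu.
  apply: sup_eqx; first by exists la, mu.
  move=> _ [l [m [hm ->]]]; case: (eqVneq (l, m) (la, mu)) => [e|ne].
    by case: e => -> ->.
  exact/ltW/(dual_strict hd hc).
have hfz : fobj d v z = - (1/2) * dotv v z.
  rewrite /fobj qformD (quad_id hd v hc) dotvE /z.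
  by set P := \sum_i _; lra.
have hδ := dmin_gt0 hd.
have hδ0 : dmin d != 0 by rewrite gt_eqF.
have hcore := norm_core hd (quad_id hd v hc).
split; [split; [exact: hfeas|split; [exact: (primal_strict hd hc)|]]|].
  rewrite !enormE; apply: sqrt_le_mul.
  - by rewrite invr_ge0 ltW.
  - by apply: sumr_ge0 => i _; exact: sqr_ge0.
  set S := \sum_i _ in hcore *.
  have -> : S = (dmin d)^-1 ^+ 2 * (dmin d ^+ 2 * S) by field.
  by apply: ler_wpM2l => //; exact: sqr_ge0.
split; [split; [|split; [exact: h3|split; [exact: (dual_strict hd hc)|]]]|].
- by move=> l m; rewrite (dual_funE hd) (Phi_min hd) (qformDinv hd).
- rewrite !enormE.
  have -> : \sum_i (la *: c - mu *: elast R n) i 0 ^+ 2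
          = \sum_i (v i 0 - d 0 i * z i 0) ^+ 2.
    apply: eq_bigr => i _; rewrite (zs_coord hd) WE !mxE eqxx andbT.
    have h' : d 0 i != 0 by rewrite gt_eqF.
    by congr (_ ^+ 2); rewrite /la /mu; field.
  apply: sqrt_le_mul.
  - have hD : 0 < dmax d by apply: lt_le_trans (le_dmax d ord0); exact: hd.
    by apply: addr_ge0 => //; apply: divr_ge0; exact: ltW.
  - by apply: sumr_ge0 => i _; exact: sqr_ge0.
  exact: (norm_core2 hd).
split; [split; [|split; [exact: hPrim|split; [exact: hDualv|]]]|].
- by rewrite hPrim hDualv (dual_star hd v hc).
- by rewrite hPrim hfz.
split; [exact: (L_strict hd)|split; [exact: h1|split; [exact: h2|split; [exact: h3|split; [exact: h4|]]]]].
split; last exact: h3.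
by rewrite hPrim -(dual_star hd v hc).
Qed.
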